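(* Let $g \colon \mathbb{R}^n \to \mathbb{R}^m$ ($m \le n$) be smooth, let $M = g^{-1}(0)$, and assume the Jacobian of $g$ has maximal rank at every point of $M$. Let $q_0, q_N \in M$. Consider the optimal control problem of extremising the cost functional \[ J(u,\lambda) = \int_0^1 \left( \tfrac{1}{2} \|u(t)\|^2 - g(q(t))^\top \lambda(t) \right) \mathrm{d} t \] over controls $(u,\lambda) \in \mathcal{C}^\infty([0,1],\mathbb{R}^n\times \mathbb{R}^m)$, where the associated state $q \in \mathcal{C}^\infty([0,1],\mathbb{R}^n)$ satisfies the state equation $\dot q = u$ with $q(0)=q_0$, $q(1)=q_N$. Then for any optimal control $(u,\lambda) \in \mathcal{C}^\infty([0,1],\mathbb{R}^n\times \mathbb{R}^m)$ with associated state trajectory $q$ there exists a costate trajectory $p\colon[0,1]\to\mathbb{R}^n$ such that \[ \dot{q}=u,\qquad \dot{p}=-g'(q)^\top \lambda, \] subject to the algebraic constraints $g(q)=0$, $p=u$, and the boundary conditions $q(0)=q_0$, $q(1)=q_N$.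
   Context: $\|\cdot\|$ is the Euclidean norm on $\mathbb{R}^n$, $g'(q)$ denotes the Jacobian matrix of $g$ at $q$ (an $m\times n$ matrix), and $^\top$ denotes transposition. *)

(* Defs.v *)
From HB Require Import structures.
From mathcomp Require Import all_boot all_order all_algebra.
From mathcomp Require Import all_classical all_reals all_analysis.
Set Implicit Arguments. Unset Strict Implicit. Unset Printing Implicit Defensive.
Import Order.TTheory GRing.Theory Num.Theory numFieldNormedType.Exports.
Local Open Scope classical_set_scope.
Local Open Scope ring_scope.

Section Defs.
Context {R : realType}.

Definition evec (n : nat) (j : 'I_n) : 'rV[R]_n := delta_mx 0 j.

Fixpoint Ck_vec (n : nat) {W : normedModType R} (k : nat) (f : 'rV[R]_n -> W) : Prop :=
  match k with
  | 0 => continuous f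
  | k'.+1 => (forall x, differentiable f x) /\ (forall j : 'I_n, Ck_vec k' ('D_(evec j) f))
  end.
Definition smooth_vec (n : nat) {W : normedModType R} (f : 'rV[R]_n -> W) :=
  forall k, Ck_vec k f.

Fixpoint Ck_real {W : normedModType R} (k : nat) (f : R -> W) : Prop :=
  match k with
  | 0 => continuous f
  | k'.+1 => (forall t, derivable f t 1) /\ Ck_real k' ('D_1 f)
  end.
Definition smooth_real {W : normedModType R} (f : R -> W) := forall k, Ck_real k f.

(* The Jacobian g'(q) (an m x n matrix) is the transpose of the library's
   row-vector convention jacobian: 'J g q := lin1_mx ('d g q) : 'M_(n, m). *)

Definition sqnorm (n : nat) (v : 'rV[R]_n) : R := \sum_(i < n) (v 0 i) ^+ 2.
Definition dotp (n : nat) (v w : 'rV[R]_n) : R := \sum_(i < n) v 0 i * w 0 i.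

Definition oint0 (f : R -> R) (t : R) : R :=
  Rintegral lebesgue_measure `[0, t] f - Rintegral lebesgue_measure `[t, 0] f.

(* associated state: q(t) = q0 + int_0^t u, i.e. the solution of qdot = u, q(0) = q0 *)
Definition state (n : nat) (q0 : 'rV[R]_n) (u : R -> 'rV[R]_n) (t : R) : 'rV[R]_n :=
  q0 + \row_(i < n) oint0 (fun s => u s 0 i) t.

Definition cost (n m : nat) (g : 'rV[R]_n -> 'rV[R]_m) (q0 : 'rV[R]_n)
  (u : R -> 'rV[R]_n) (lam : R -> 'rV[R]_m) : R :=
  Rintegral lebesgue_measure `[0, 1]
    (fun t => 2^-1 * sqnorm (u t) - dotp (g (state q0 u t)) (lam t)).

Definition admissible (n m : nat) (q0 qN : 'rV[R]_n)
  (u : R -> 'rV[R]_n) (lam : R -> 'rV[R]_m) : Prop :=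
  smooth_real u /\ smooth_real lam /\ state q0 u 1 = qN.

(* optimal (= extremal) control: admissible, and the first variation of J
   vanishes in every admissible smooth direction *)
Definition extremal (n m : nat) (g : 'rV[R]_n -> 'rV[R]_m) (q0 qN : 'rV[R]_n)
  (u : R -> 'rV[R]_n) (lam : R -> 'rV[R]_m) : Prop :=
  admissible q0 qN u lam /\
  forall (du : R -> 'rV[R]_n) (dlam : R -> 'rV[R]_m),
    (forall e : R, admissible q0 qN (fun t => u t + e *: du t) (fun t => lam t + e *: dlam t)) ->
    is_derive (0 : R) 1
      (fun e : R => cost g q0 (fun t => u t + e *: du t) (fun t => lam t + e *: dlam t)) 0.

End Defs.

(* Main.v *)
Require Import Defs.
From HB Require Import structures.
From mathcomp Require Import all_boot all_order all_algebra.
From mathcomp Require Import all_classical all_reals all_analysis.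
From mathcomp Require Import lra ring.
Import Order.TTheory GRing.Theory Num.Theory numFieldNormedType.Exports.
Local Open Scope classical_set_scope.
Local Open Scope ring_scope.

Section Oint.
Context {R : realType}.
Notation mu := (@lebesgue_measure R).

Lemma oint0_0 (f : R -> R) : oint0 f 0 = 0.
Proof. by rewrite /oint0 set_itv1 Rintegral_set1 subrr. Qed.

Lemma oint0_ge0 (f : R -> R) s : 0 <= s -> oint0 f s = \int[mu]_(x in `[0, s]) f x.
Proof.
rewrite le_eqVlt => /predU1P[<-|s0]; first by rewrite oint0_0 set_itv1 Rintegral_set1.
by rewrite /oint0 (@set_itv_ge _ _ (BLeft s) (BRight 0)) ?Rintegral_set0 ?subr0// bnd_simp -ltNge.
Qed.

Lemma oint0_lt0 (f : R -> R) s : s < 0 -> oint0 f s = - \int[mu]_(x in `[s, 0]) f x.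
Proof.
by move=> s0; rewrite /oint0 (@set_itv_ge _ _ (BLeft 0) (BRight s)) ?Rintegral_set0 ?sub0r// bnd_simp -ltNge.
Qed.

Lemma cont_int (f : R -> R) a b : continuous f -> mu.-integrable `[a, b] (EFin \o f).
Proof.
move=> cf; apply: continuous_compact_integrable; first exact: segment_compact.
exact: continuous_subspaceT.
Qed.

Lemma oint0_derive (f : R -> R) : continuous f -> forall t : R, is_derive t (1:R) (oint0 f) (f t).
Proof.
move=> cf t.
pose a := Num.min t 0 - 1. pose b := Num.max t 0 + 1.
pose F s := \int[mu]_(x in `[a, s]) f x.
have m1 : Num.min t 0 <= t by rewrite ge_min lexx.
have m2 : Num.min t 0 <= 0 by rewrite ge_min lexx orbT.
have M1 : t <= Num.max t 0 by rewrite le_max lexx.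
have at0 : a < t by rewrite /a; lra.
have a0 : a < 0 by rewrite /a; lra.
have tb : t < b by rewrite /b; lra.
have [dF F'] := @continuous_FTC1_closed R f a t b tb (cont_int f a b cf) at0 (cf t).
have eq : \near t, F t - F 0 = oint0 f t.
  near=> s.
  have as_ : a < s by near: s; exact: lt_nbhsr.
  have [s0|s0] := leP 0 s.
    rewrite oint0_ge0 //.
    rewrite /F (@Rintegral_itvB _ f (BLeft a) (BRight s) 0); last 3 first.
    - exact: cont_int f _ _ cf.
    - by rewrite bnd_simp ltW.
    - by rewrite bnd_simp.
    by rewrite Rintegral_itv_obnd_cbnd //; apply: integrableS (cont_int f 0 s cf) => //; apply: subset_itvr; rewrite bnd_simp.
  rewrite oint0_lt0 //.
  rewrite /F -opprB (@Rintegral_itvB _ f (BLeft a) (BRight 0) s); last 3 first.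
  - exact: cont_int f _ _ cf.
  - by rewrite bnd_simp ltW.
  - by rewrite bnd_simp ltW.
  by rewrite Rintegral_itv_obnd_cbnd //; apply: integrableS (cont_int f s 0 cf) => //; apply: subset_itvr; rewrite bnd_simp.
apply: near_eq_is_derive eq _.
have hF : is_derive t 1 F (f t) by apply: DeriveDef => //; rewrite -derive1E.
have := @is_deriveB _ _ _ F (cst (F 0)) t 1 (f t) 0 hF _.
by rewrite subr0; apply.
Unshelve. all: by end_near. Qed.

End Oint.

Section Mvt.
Context {R : realType}.

Lemma mvt_all (H h : R -> R) x y : (forall t, is_derive t (1:R) H (h t)) -> x < y ->
  exists2 c, c \in `]x, y[ & H y - H x = h c * (y - x).
Proof.
move=> dH xy; apply: MVT => //.
apply: derivable_within_continuous => t _.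
by have [] := dH t.
Qed.

Lemma deriv0_cst (H : R -> R) : (forall t, is_derive t (1:R) H 0) -> forall t, H t = H 0.
Proof.
move=> dH t; have [t0|t0|->//] := ltgtP t 0.
  have [c _ e] := @mvt_all H (fun=> 0) t 0 dH t0.
  by apply/eqP; rewrite eq_sym -subr_eq0 e mul0r.
have [c _ e] := @mvt_all H (fun=> 0) 0 t dH t0.
by apply/eqP; rewrite -subr_eq0 e mul0r.
Qed.

Lemma mvt_ge (H h : R -> R) x y : (forall t, is_derive t (1:R) H (h t)) ->
  (forall t, x <= t <= y -> 0 <= h t) -> x <= y -> H x <= H y.
Proof.
move=> dH hp; rewrite le_eqVlt => /predU1P[->//|xy].
have [c + e] := @mvt_all H h x y dH xy.
rewrite in_itv /= => /andP[c1 c2].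
rewrite -subr_ge0 e; apply: mulr_ge0; last by rewrite subr_ge0 ltW.
by apply: hp; rewrite (ltW c1) (ltW c2).
Qed.

End Mvt.

Section Zero.
Context {R : realType}.
Notation mu := (@lebesgue_measure R).

Lemma is_derive_uniq (F : R -> R) t a b : is_derive t (1:R) F a -> is_derive t (1:R) F b -> a = b.
Proof. by move=> [_ <-] [_ <-]. Qed.

Lemma zero_ext01 (h : R -> R) : continuous h -> (forall s, 0 < s < 1 -> h s = 0) ->
  forall t, 0 <= t <= 1 -> h t = 0.
Proof.
move=> ch hs.
move=> t /andP[t0 t1].
have [tlt1|] := ltP t 1.
  have L1 : h x @[x --> t^'+] --> h t := cvg_at_right_filter (ch t).
  have L2 : h x @[x --> t^'+] --> (0:R).
    apply/cvgrPdist_le => e e0; near=> r.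
    rewrite hs ?subrr ?normr0 ?ltW //; apply/andP; split.
          by apply: (le_lt_trans t0); near: r; exact: nbhs_right_gt.
    by near: r; exact: nbhs_right_lt.
  exact: (cvg_unique _ L1 L2).
move=> t1'; have te : t = 1 by apply/eqP; rewrite eq_le t1 t1'.
have L1 : h x @[x --> t^'-] --> h t := cvg_at_left_filter (ch t).
have L2 : h x @[x --> t^'-] --> (0:R).
  apply/cvgrPdist_le => e e0; near=> r.
    rewrite hs ?subrr ?normr0 ?ltW //; apply/andP; split.
      by near: r; apply: nbhs_left_gt; rewrite te.
  by rewrite -te; near: r; exact: nbhs_left_lt.
exact: (cvg_unique _ L1 L2).
Unshelve. all: by end_near. Qed.

Lemma int01_zero (h : R -> R) : continuous h -> (forall t, 0 <= t <= 1 -> 0 <= h t) ->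
  \int[mu]_(x in `[0, 1]) h x = 0 -> forall t, 0 <= t <= 1 -> h t = 0.
Proof.
move=> ch hp i0.
pose H := oint0 h.
have dH := oint0_derive h ch.
have H0 : H 0 = 0 by rewrite /H oint0_0.
have H1 : H 1 = 0 by rewrite /H oint0_ge0.
have Hs : forall s, 0 < s < 1 -> H s = 0.
  move=> s /andP[s0 s1]; apply/eqP; rewrite eq_le; apply/andP; split.
    rewrite -H1; apply: (@mvt_ge R H h s 1 dH); last exact: ltW.
    by move=> r /andP[r1 r2]; apply: hp; rewrite r2 andbT (le_trans (ltW s0)).
  rewrite -H0; apply: (@mvt_ge R H h 0 s dH); last exact: ltW.
  by move=> r /andP[r1 r2]; apply: hp; rewrite r1 (le_trans r2) // ltW.
have hs : forall s, 0 < s < 1 -> h s = 0.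
  move=> s /andP[s0 s1].
  have nz : \near s, (cst 0 : R -> R) s = H s.
    near=> r; rewrite Hs //; apply/andP; split.
      by near: r; exact: lt_nbhsr.
    by near: r; exact: lt_nbhsl.
  have d0 : is_derive s (1:R) H 0 := near_eq_is_derive nz (is_derive_cst 0 s 1).
  exact: (is_derive_uniq _ _ _ _ (dH s) d0).
by apply: zero_ext01.
Unshelve. all: by end_near. Qed.


End Zero.

Section Var.
Context {R : realType}.
Notation mu := (@lebesgue_measure R).

Lemma is_derive_ext' {V W : normedModType R} (F G : V -> W) x v d d' :
  is_derive x v F d -> (forall s, F s = G s) -> d = d' -> is_derive x v G d'.
Proof. by move=> h FG <-; have <- : F = G by apply/funext. Qed.

Lemma oint0_var (f h H : R -> R) (e : R) : continuous f -> continuous h ->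
  (forall t, is_derive t (1:R) H (h t)) ->
  forall t, oint0 (fun s => f s + e * h s) t = oint0 f t + e * (H t - H 0).
Proof.
move=> cf ch dH.
pose g := fun s => f s + e * h s.
have cg : continuous g.
  by move=> x; apply: cvgD; [exact: cf | apply: cvgM; [exact: cvg_cst | exact: ch]].
pose D : R -> R := fun s => oint0 g s - oint0 f s - e * H s.
have dD : forall t, is_derive t (1:R) D 0.
  move=> t.
  have h1 := is_deriveB (is_deriveB (oint0_derive g cg t) (oint0_derive f cf t)) (is_deriveZ e (dH t)).
  apply: (is_derive_ext' _ _ _ _ _ _ h1) => [s|]; first by [].
  by rewrite /g /GRing.scale /=; ring.
move=> t; have := deriv0_cst D dD t.
rewrite /D !oint0_0 !sub0r oppr0 sub0r => E.
have -> : oint0 g t = oint0 f t + e * H t - e * H 0 by rewrite -E; ring.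
ring.
Qed.


Lemma oint0_zero (t : R) : oint0 (fun _ => 0) t = 0.
Proof. by rewrite /oint0 !Rintegral_cst // !mul0r subrr. Qed.

Lemma ftc_oint (h H : R -> R) : continuous h -> (forall t, is_derive t (1:R) H (h t)) ->
  forall t, oint0 h t = H t - H 0.
Proof.
move=> ch dH t.
have c0 : continuous (fun _ : R => (0:R)) by move=> x; exact: cvg_cst.
have := oint0_var (fun _ => 0) h H 1 c0 ch dH t.
rewrite oint0_zero add0r mul1r => <-.
by congr oint0; apply/funext => s; rewrite add0r mul1r.
Qed.

End Var.

Section Smooth1.
Context {R : realType}.

Lemma cvg_mx_coord {T : Type} (F : set_system T) {FF : Filter F} a b
  (f : T -> 'M[R]_(a, b)) (l : 'M[R]_(a, b)) :
  (forall i j, (fun x => f x i j) @ F --> l i j) -> f @ F --> l.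
Proof.
move=> H; apply/cvgrPdist_le => e e0.
have H' : forall ij : 'I_a * 'I_b, \forall x \near F, `|l ij.1 ij.2 - f x ij.1 ij.2| <= e.
  by move=> [i j]; move/cvgrPdist_le : (H i j) => /(_ e e0).
near=> x.
rewrite [leLHS]/Num.Def.normr/= mx_normrE (bigmax_le _ (ltW e0))//= => ij _.
rewrite !mxE; move: ij; near: x; exact: filter_forall.
Unshelve. all: by end_near. Qed.

Lemma continuous_mxP (V : topologicalType) a b (f : V -> 'M[R]_(a, b)) :
  continuous f <-> forall i j, continuous (fun x => f x i j).
Proof.
split.
  move=> cf i j x; exact: (continuous_comp (cf x) (@coord_continuous R a b i j (f x))).
by move=> H x; apply: cvg_mx_coord => i j; exact: H.
Qed.


Section CkW.
Context {W : normedModType R}.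

Lemma Ck_mono k (f : R -> W) : Ck_real k.+1 f -> Ck_real k f.
Proof.
elim: k f => [|k IH] f /= [df Hf].
  move=> x; apply: differentiable_continuous; apply/derivable1_diffP; exact: df.
by split => //; apply: IH.
Qed.

Lemma Ck_add k (f g : R -> W) : Ck_real k f -> Ck_real k g -> Ck_real k (fun t => f t + g t).
Proof.
elim: k f g => [|k IH] f g /=.
  by move=> cf cg x; apply: cvgD; [exact: cf | exact: cg].
move=> [df Hf] [dg Hg]; split.
  by move=> t; apply: derivableD.
have -> : 'D_1 (fun t => f t + g t) = (fun t => 'D_1 f t + 'D_1 g t).
  by apply/funext => t; apply: deriveD.
exact: IH.
Qed.

Lemma Ck_cst k (c : W) : Ck_real k (fun _ : R => c).
Proof.
elim: k c => [|k IH] c /=; first by move=> x; exact: cvg_cst.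
split; first by move=> t; exact: derivable_cst.
have -> : 'D_1 (fun _ : R => c) = (fun _ => 0).
  by apply/funext => t; exact: (derive_cst c).
exact: IH.
Qed.

Lemma Ck_sum k p (F : 'I_p -> R -> W) : (forall i, Ck_real k (F i)) ->
  Ck_real k (fun t => \sum_(i < p) F i t).
Proof.
elim: p F => [|p IH] F HF.
  have -> : (fun t => \sum_(i < 0) F i t) = (fun _ => 0).
    by apply/funext => t; rewrite big_ord0.
  exact: Ck_cst.
have -> : (fun t => \sum_(i < p.+1) F i t) =
   (fun t => \sum_(i < p) F (widen_ord (leqnSn p) i) t + F ord_max t).
  by apply/funext => t; rewrite big_ord_recr.
apply: Ck_add; last exact: HF.
exact: (IH (fun i => F (widen_ord (leqnSn p) i))).
Qed.

End CkW.

Lemma Ck_mul k (a b : R -> R) : Ck_real k a -> Ck_real k b -> Ck_real k (fun t => a t * b t).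
Proof.
elim: k a b => [|k IH] a b /=.
  by move=> ca cb x; apply: cvgM; [exact: ca | exact: cb].
move=> [da Ha] [db Hb]; split.
  by move=> t; apply: derivableM.
have -> : 'D_1 (fun t => a t * b t) = (fun t => a t * 'D_1 b t + 'D_1 a t * b t).
  apply/funext => t; rewrite deriveM //.
  by rewrite /GRing.scale /= mulrC [_ * b t]mulrC.
apply: Ck_add; apply: IH => //; apply: Ck_mono => /=; by split.
Qed.

Lemma Ck_id k : Ck_real k (fun t : R => t).
Proof.
case: k => [|k] /=; first by move=> x.
split; first by move=> t; exact: derivable_id.
have -> : 'D_1 (fun t : R => t) = (fun _ => 1).
  by apply/funext => t; exact: derive_id.
exact: Ck_cst.
Qed.

End Smooth1.

Section Smooth2.
Context {R : realType}.

Lemma Dcoord a b (f : R -> 'M[R]_(a, b)) i j : (forall t, derivable f t 1) ->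
  (fun t => 'D_1 f t i j) = 'D_1 (fun t => f t i j).
Proof. by move=> df; apply/funext => t; rewrite derive_mx // mxE. Qed.

Lemma Ck_mxP k a b (f : R -> 'M[R]_(a, b)) :
  Ck_real k f <-> forall i j, Ck_real k (fun t => f t i j).
Proof.
elim: k f => [|k IH] f /=; first exact: continuous_mxP.
split.
  move=> [df Hf] i j; split.
    by move=> t; move/derivable_mxP : (df t); apply.
  rewrite -Dcoord //; exact: (IH ('D_1 f)).1.
move=> H.
have df : forall t, derivable f t 1.
  by move=> t; apply/derivable_mxP => i j; exact: (H i j).1.
split => //.
apply/IH => i j; rewrite Dcoord //; exact: (H i j).2.
Qed.

Lemma Ck_vec_coord k n a b (g : 'rV[R]_n -> 'M[R]_(a, b)) i j :
  Ck_vec k g -> Ck_vec k (fun x => g x i j).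
Proof.
elim: k g => [|k IH] g /=.
  by move=> cg x; exact: (continuous_comp (cg x) (@coord_continuous R a b i j (g x))).
move=> [dg Hg]; split.
  move=> x; apply: (@differentiable_comp _ _ _ _ g (fun M : 'M[R]_(a, b) => M i j)) => //.
  exact: differentiable_coord.
move=> j'.
have -> : 'D_(evec j') (fun x => g x i j) = (fun x => 'D_(evec j') g x i j).
  apply/funext => x; rewrite derive_mx ?mxE //.
  exact: diff_derivable.
exact: IH.
Qed.


Lemma Ck_comp k n (f : 'rV[R]_n -> R) (q : R -> 'rV[R]_n) :
  Ck_vec k f -> Ck_real k q -> Ck_real k (fun t => f (q t)).
Proof.
elim: k f q => [|k IH] f q /=.
  by move=> cf cq x; exact: (continuous_comp (cq x) (cf (q x))).
move=> [df Hf] [dq Hq].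
have dq' : forall t, differentiable q t by move=> t; apply/derivable1_diffP.
have dfq : forall t, differentiable (f \o q) t.
  by move=> t; apply: differentiable_comp.
split.
  by move=> t; apply/derivable1_diffP; exact: dfq.
have -> : 'D_1 (fun t => f (q t)) =
   (fun t => \sum_(j < n) 'D_1 q t 0 j * 'D_(evec j) f (q t)).
  apply/funext => t.
  change ('D_1 (f \o q) t = \sum_(j < n) 'D_1 q t 0 j * 'D_(evec j) f (q t)).
  rewrite deriveE // diff_comp // /=.
  have e1 : 'd q t 1 = 'D_1 q t by rewrite deriveE.
  rewrite e1 [in LHS](row_sum_delta ('D_1 q t)) linear_sum; apply: eq_bigr => j _.
  by rewrite linearZ /= -deriveE.
apply: Ck_sum => j; apply: Ck_mul.
  by move/Ck_mxP : Hq; apply.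
apply: (IH ('D_(evec j) f) q (Hf j)).
by apply: Ck_mono => /=; split.
Qed.

End Smooth2.

Section DerComb.
Context {R : realType}.
Set Implicit Arguments. Unset Strict Implicit.

Lemma isd_ext {V W : normedModType R} (F G : V -> W) x v d d' :
  is_derive x v F d -> (forall s, F s = G s) -> d = d' -> is_derive x v G d'.
Proof. by move=> h FG <-; have <- : F = G by apply/funext. Qed.

Lemma isd_add (F G : R -> R) x a b : is_derive x (1:R) F a -> is_derive x (1:R) G b ->
  is_derive x (1:R) (fun e => F e + G e) (a + b).
Proof. by move=> hF hG; apply: (isd_ext (is_deriveD hF hG)). Qed.

Lemma isd_sub (F G : R -> R) x a b : is_derive x (1:R) F a -> is_derive x (1:R) G b ->
  is_derive x (1:R) (fun e => F e - G e) (a - b).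
Proof. by move=> hF hG; apply: (isd_ext (is_deriveB hF hG)). Qed.

Lemma isd_mul (F G : R -> R) x a b : is_derive x (1:R) F a -> is_derive x (1:R) G b ->
  is_derive x (1:R) (fun e => F e * G e) (a * G x + F x * b).
Proof.
move=> hF hG; apply: (isd_ext (is_deriveM hF hG)) => //.
by rewrite /GRing.scale /= addrC mulrC.
Qed.

Lemma isd_cst (c : R) x : is_derive x (1:R) (fun _ : R => c) 0.
Proof. exact: is_derive_cst. Qed.

Lemma isd_id x : is_derive x (1:R) (fun e : R => e) 1.
Proof. exact: is_derive_id. Qed.

Lemma isd_sum p (F : 'I_p -> R -> R) x (a : 'I_p -> R) :
  (forall i, is_derive x (1:R) (F i) (a i)) ->
  is_derive x (1:R) (fun e => \sum_(i < p) F i e) (\sum_(i < p) a i).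
Proof.
elim: p F a => [|p IH] F a H.
  apply: (isd_ext (isd_cst 0 x)) => [s|]; by rewrite big_ord0.
apply: (isd_ext (isd_add (IH (fun i => F (widen_ord (leqnSn p) i)) (fun i => a (widen_ord (leqnSn p) i)) (fun i => H _)) (H ord_max))).
  by move=> s; rewrite big_ord_recr.
by rewrite big_ord_recr.
Qed.

Lemma isd_line {V W : normedModType R} (g : V -> W) (x y : V) (e : R) :
  derivable g (x + e *: y) y ->
  is_derive e (1:R) (fun e' => g (x + e' *: y)) ('D_y g (x + e *: y)).
Proof.
move=> dg.
have E : (fun h : R => h^-1 *: ((fun e' => g (x + e' *: y)) (h *: 1 + e) - g (x + e *: y))) =
         (fun h : R => h^-1 *: (g (h *: y + (x + e *: y)) - g (x + e *: y))).
  apply/funext => h /=; congr (_ *: (g _ - _)).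
  have -> : h *: (1:R) = h by rewrite -[RHS]mulr1.
  by rewrite scalerDl addrCA addrA.
apply: DeriveDef; rewrite /derivable /derive E //.
Qed.

Lemma isd_mx_coord {a b} (F : R -> 'M[R]_(a, b)) x (d : 'M[R]_(a, b)) i j :
  is_derive x (1:R) F d -> is_derive x (1:R) (fun e => F e i j) (d i j).
Proof.
move=> [dF <-]; apply: DeriveDef.
  by move/derivable_mxP : dF; apply.
by rewrite derive_mx // mxE.
Qed.

Lemma isd_mx {a b} (F : R -> 'M[R]_(a, b)) x (d : 'M[R]_(a, b)) :
  (forall i j, is_derive x (1:R) (fun e => F e i j) (d i j)) -> is_derive x (1:R) F d.
Proof.
move=> H; apply: DeriveDef.
  by apply/derivable_mxP => i j; case: (H i j).
rewrite derive_mx; last by apply/derivable_mxP => i j; case: (H i j).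
by apply/matrixP => i j; rewrite mxE; case: (H i j).
Qed.

End DerComb.
Unset Implicit Arguments. Set Strict Implicit.

Section ContComb.
Context {R : realType} {T : topologicalType}.

Lemma ct_add (f g : T -> R) : continuous f -> continuous g -> continuous (fun x => f x + g x).
Proof. by move=> cf cg x; apply: cvgD; [exact: cf|exact: cg]. Qed.

Lemma ct_sub (f g : T -> R) : continuous f -> continuous g -> continuous (fun x => f x - g x).
Proof. by move=> cf cg x; apply: cvgB; [exact: cf|exact: cg]. Qed.

Lemma ct_mul (f g : T -> R) : continuous f -> continuous g -> continuous (fun x => f x * g x).
Proof. by move=> cf cg x; apply: cvgM; [exact: cf|exact: cg]. Qed.

Lemma ct_cst (c : R) : continuous (fun _ : T => c).
Proof. by move=> x; exact: cvg_cst. Qed.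

Lemma ct_sum p (F : 'I_p -> T -> R) : (forall i, continuous (F i)) ->
  continuous (fun x => \sum_(i < p) F i x).
Proof.
elim: p F => [|p IH] F H.
  have -> : (fun x => \sum_(i < 0) F i x) = (fun _ => 0) by apply/funext => x; rewrite big_ord0.
  exact: ct_cst.
have -> : (fun x => \sum_(i < p.+1) F i x) =
   (fun x => \sum_(i < p) F (widen_ord (leqnSn p) i) x + F ord_max x).
  by apply/funext => t; rewrite big_ord_recr.
apply: ct_add; last exact: H.
exact: (IH (fun i => F (widen_ord (leqnSn p) i))).
Qed.

Lemma ct_coord a b (f : T -> 'M[R]_(a, b)) i j : continuous f -> continuous (fun x => f x i j).
Proof. by move/continuous_mxP; apply. Qed.

Lemma ct_rV_add n (f g : T -> 'rV[R]_n) : continuous f -> continuous g -> continuous (fun x => f x + g x).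
Proof.
move=> cf cg; apply/continuous_mxP => i j.
have -> : (fun x => (f x + g x) i j) = (fun x => f x i j + g x i j) by apply/funext => x; rewrite mxE.
by apply: ct_add; apply: ct_coord.
Qed.

Lemma ct_rV_scale n (a : T -> R) (f : T -> 'rV[R]_n) : continuous a -> continuous f -> continuous (fun x => a x *: f x).
Proof.
move=> ca cf; apply/continuous_mxP => i j.
have -> : (fun x => (a x *: f x) i j) = (fun x => a x * f x i j) by apply/funext => x; rewrite mxE.
by apply: ct_mul => //; apply: ct_coord.
Qed.

Lemma ct_comp {U V : topologicalType} (f : T -> U) (g : U -> V) : continuous f -> continuous g ->
  continuous (fun x => g (f x)).
Proof. by move=> cf cg x; exact: (continuous_comp (cf x) (cg (f x))). Qed.

End ContComb.

Section ContProd.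
Context {R : realType}.
Lemma ct_fst : continuous (fun p : R * R => p.1).
Proof. by move=> p; exact: cvg_fst. Qed.
Lemma ct_snd : continuous (fun p : R * R => p.2).
Proof. by move=> p; exact: cvg_snd. Qed.
End ContProd.
Section Bound.
Context {R : realType}.
Lemma bound2 (Phi : R * R -> R) : continuous Phi ->
  exists M : R, 0 <= M /\ forall e t, -1 <= e <= 1 -> 0 <= t <= 1 -> `|Phi (e, t)| <= M.
Proof.
move=> cP.
have cK : compact (`[-1, 1] `*` `[0, 1] : set (R * R)).
  by apply: compact_setX; exact: segment_compact.
have /compact_bounded[M [_ mrt]] := continuous_compact (continuous_subspaceT cP) cK.
exists (`|M| + 1); split; first by rewrite addr_ge0.
move=> e t he ht; apply: mrt.
  by rewrite (le_lt_trans (ler_norm M)) // ltrDl.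
exists (e, t) => //; split; by rewrite /= in_itv /=.
Qed.
End Bound.
Arguments ct_coord {R T a b f} i j _.
Arguments ct_add {R T f g} _ _.
Arguments ct_sub {R T f g} _ _.
Arguments ct_mul {R T f g} _ _.
Arguments ct_comp {T U V f g} _ _.
Arguments ct_sum {R T p F} _.
Arguments ct_rV_add {R T n f g} _ _.
Arguments ct_rV_scale {R T n a f} _ _.

Section Main.
Context {R : realType} (n m : nat) (g : 'rV[R]_n -> 'rV[R]_m) (hg : smooth_vec g)
  (q0 qN : 'rV[R]_n) (u : R -> 'rV[R]_n) (lam : R -> 'rV[R]_m)
  (hopt : extremal g q0 qN u lam).
Notation mu := (@lebesgue_measure R).

Let q := state q0 u.
Let su : smooth_real u := hopt.1.1.
Let sl : smooth_real lam := hopt.1.2.1.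

Lemma Ck_scale k a (e : R) (f : R -> 'rV[R]_a) : Ck_real k f -> Ck_real k (fun t => e *: f t).
Proof.
move/Ck_mxP => H; apply/Ck_mxP => i j.
have -> : (fun t => (e *: f t) i j) = (fun t => e * f t i j) by apply/funext => t; rewrite mxE.
by apply: Ck_mul; [exact: Ck_cst | exact: H].
Qed.

Lemma coordC a (f : R -> 'rV[R]_a) k j : Ck_real k f -> Ck_real k (fun t => f t 0 j).
Proof. by move/Ck_mxP; apply. Qed.
Arguments coordC {a f k} j _.

Lemma q_der t : is_derive t (1:R) q (u t).
Proof.
apply: isd_mx => i j; rewrite (ord1 i).
have cu : continuous (fun s => u s 0 j) by exact: (coordC j (su 0)).
apply: (isd_ext (isd_add (isd_cst (q0 0 j) t) (oint0_derive _ cu t))) => [s|].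
  by rewrite /q /state !mxE.
by rewrite add0r.
Qed.

Lemma q_smooth : smooth_real q.
Proof.
have Dq : 'D_1 q = u by apply/funext => t; have [_ ->] := q_der t.
have H : forall k, Ck_real k.+1 q.
  move=> k /=; split; first by move=> t; have [] := q_der t.
  by rewrite Dq; exact: su.
by case=> [|k]; [exact: Ck_mono (H 0%N) | exact: H].
Qed.

Lemma Dlin (f : 'rV[R]_n -> 'rV[R]_m) z v : differentiable f z ->
  'D_v f z = \sum_(j < n) v 0 j *: 'D_(evec j) f z.
Proof.
move=> df; rewrite deriveE // [in LHS](row_sum_delta v) linear_sum.
by apply: eq_bigr => j _; rewrite linearZ /= -deriveE.
Qed.

Lemma w_coord t j : (lam t *m (jacobian g (q t))^T) 0 j =
  \sum_(i < m) lam t 0 i * 'D_(evec j) g (q t) 0 i.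
Proof.
rewrite !mxE; apply: eq_bigr => i _; rewrite !mxE.
by rewrite deriveE //; case: (hg 1%N) => dg _; exact: dg.
Qed.


Lemma half2 (x : R) : 2^-1 * (2 * x) = x.
Proof. by rewrite mulrA mulVf ?mul1r // pnatr_eq0. Qed.

Lemma aff (e a b : R) : is_derive e (1:R) (fun e => a + e * b) b.
Proof.
apply: (isd_ext (isd_add (isd_cst a e) (isd_mul (isd_id e) (isd_cst b e)))) => //.
by rewrite add0r mul1r mulr0 addr0.
Qed.

Lemma VAR (Q : R -> 'rV[R]_n) (dl : R -> 'rV[R]_m) : smooth_real Q -> smooth_real dl ->
  Q 0 = 0 -> Q 1 = 0 ->
  \int[mu]_(t in `[0, 1]) (\sum_(i < n) u t 0 i * 'D_1 Q t 0 i
     - \sum_(i < m) ((\sum_(j < n) Q t 0 j * 'D_(evec j) g (q t) 0 i) * lam t 0 i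
                      + g (q t) 0 i * dl t 0 i)) = 0.
Proof.
move=> sQ sdl Q0 Q1.
pose du := 'D_1 Q.
have sdu : smooth_real du := fun k => (sQ k.+1).2.
have dQ : forall t, is_derive t (1:R) Q (du t).
  by move=> t; apply: DeriveDef => //; case: (sQ 1%N) => dq _; exact: dq.
have dg : forall z, differentiable g z by case: (hg 1%N).
have cu : forall i, continuous (fun t => u t 0 i) := fun i => coordC i (su 0).
have cdu : forall i, continuous (fun t => du t 0 i) := fun i => coordC i (sdu 0).
have clam : forall i, continuous (fun t => lam t 0 i) := fun i => coordC i (sl 0).
have cdl : forall i, continuous (fun t => dl t 0 i) := fun i => coordC i (sdl 0).
have cQ : continuous Q := sQ 0%N.
have cq : continuous q := q_smooth 0%N.
have cg : continuous g := hg 0%N.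
have cDg : forall j, continuous ('D_(evec j) g) by move=> j; case: (hg 1%N) => _; apply.
pose U e := fun t => u t + e *: du t.
pose L e := fun t => lam t + e *: dl t.
have st_eq : forall e t, state q0 (U e) t = q t + e *: Q t.
  move=> e t; apply/matrixP => i j; rewrite (ord1 i) /q /state !mxE.
  have -> : (fun s => U e s 0 j) = (fun s => u s 0 j + e * du s 0 j).
    by apply/funext => s; rewrite !mxE.
  rewrite (oint0_var _ _ (fun s => Q s 0 j) e (cu j) (cdu j) (fun t => isd_mx_coord 0 j (dQ t))).
  by rewrite Q0 mxE subr0 addrA.
have adm : forall e, admissible q0 qN (U e) (L e).
  move=> e; split; [|split].
  - by move=> k; apply: Ck_add; [exact: su | exact: Ck_scale (sdu k)].
  - by move=> k; apply: Ck_add; [exact: sl | exact: Ck_scale (sdl k)].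
  - by rewrite st_eq Q1 scaler0 addr0; exact: hopt.1.2.2.
have Hvar := hopt.2 du dl adm.
pose z e t := q t + e *: Q t.
pose f e t := 2^-1 * (\sum_(i < n) (u t 0 i + e * du t 0 i) * (u t 0 i + e * du t 0 i))
   - \sum_(i < m) g (z e t) 0 i * (lam t 0 i + e * dl t 0 i).
have costE : forall e, cost g q0 (U e) (L e) = \int[mu]_(t in `[0, 1]) f e t.
  move=> e; rewrite /cost; apply: eq_Rintegral => t _.
  rewrite st_eq /sqnorm /dotp /f /z; congr (_ * _ - _); apply: eq_bigr => i _;
    by rewrite !mxE ?expr2.
pose P e t := \sum_(i < n) (u t 0 i + e * du t 0 i) * du t 0 i
   - \sum_(i < m) ((\sum_(j < n) Q t 0 j * 'D_(evec j) g (z e t) 0 i) * (lam t 0 i + e * dl t 0 i)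
                   + g (z e t) 0 i * dl t 0 i).
have fder : forall e t, is_derive e (1:R) (fun e => f e t) (P e t).
  move=> e t.
  have h1 := isd_mul (isd_cst 2^-1 e)
     (isd_sum (fun i => isd_mul (aff e (u t 0 i) (du t 0 i)) (aff e (u t 0 i) (du t 0 i)))).
  have h2 : forall i, is_derive e (1:R) (fun e => g (z e t) 0 i * (lam t 0 i + e * dl t 0 i))
     ((\sum_(j < n) Q t 0 j * 'D_(evec j) g (z e t) 0 i) * (lam t 0 i + e * dl t 0 i)
                   + g (z e t) 0 i * dl t 0 i).
    move=> i.
    have dd : derivable g (q t + e *: Q t) (Q t) by apply: diff_derivable; exact: dg.
    have hl := isd_mx_coord 0 i (isd_line dd).
    apply: (isd_ext (isd_mul hl (aff e (lam t 0 i) (dl t 0 i)))) => //.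
    by rewrite (Dlin _ _ _ (dg _)) summxE; congr (_ * _ + _); apply: eq_bigr => j _; rewrite mxE.
  apply: (isd_ext (isd_sub h1 (isd_sum h2))) => //.
  rewrite mul0r add0r mulr_sumr; congr (_ - _); apply: eq_bigr => i _.
  by rewrite -[RHS]half2; congr (_ * _); ring.
have cz : continuous (fun p : R * R => z p.1 p.2).
  exact: ct_rV_add (ct_comp ct_snd cq) (ct_rV_scale ct_fst (ct_comp ct_snd cQ)).
have cPhi : continuous (fun p : R * R => P p.1 p.2).
  rewrite /P; apply: ct_sub.
    apply: ct_sum => i; apply: ct_mul; last exact: (ct_comp ct_snd (cdu i)).
    apply: ct_add; first exact: (ct_comp ct_snd (cu i)).
    by apply: ct_mul; [exact: ct_fst | exact: (ct_comp ct_snd (cdu i))].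
  apply: ct_sum => i; apply: ct_add.
    apply: ct_mul.
      apply: ct_sum => j; apply: ct_mul.
        exact: (ct_coord 0 j (ct_comp ct_snd cQ)).
      exact: (ct_coord 0 i (ct_comp cz (cDg j))).
    apply: ct_add; first exact: (ct_comp ct_snd (clam i)).
    by apply: ct_mul; [exact: ct_fst | exact: (ct_comp ct_snd (cdl i))].
  apply: ct_mul; first exact: (ct_coord 0 i (ct_comp cz cg)).
  exact: (ct_comp ct_snd (cdl i)).
have cft : forall e, continuous (fun t => f e t).
  move=> e; have cze : continuous (fun t => z e t).
    exact: ct_rV_add cq (ct_rV_scale (ct_cst e) cQ).
  rewrite /f; apply: ct_sub.
    apply: ct_mul; first exact: ct_cst.
    apply: ct_sum => i.
    by apply: ct_mul; apply: ct_add (cu i) (ct_mul (ct_cst e) (cdu i)).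
  apply: ct_sum => i; apply: ct_mul; first exact: (ct_coord 0 i (ct_comp cze cg)).
  exact: ct_add (clam i) (ct_mul (ct_cst e) (cdl i)).
have [M [M0 HM]] := bound2 _ cPhi.
have Ia : `]-1, 1[%classic (0:R) by rewrite /= in_itv /= ltrN10 ltr01.
have derf1 : forall x y, `]-1, 1[%classic x -> `[0, 1]%classic y -> derivable (f^~ y) x 1.
  by move=> x y _ _; case: (fder x y).
have Gub : forall x y, `]-1, 1[%classic x -> `[0, 1]%classic y -> `|partial1of2 f x y| <= M.
  move=> x y hx hy; rewrite partial1of2E; case: (fder x y) => _ ->.
  apply: HM.
    by move: hx; rewrite /= in_itv /= => /andP[h1 h2]; rewrite !ltW.
  by move: hy; rewrite /= in_itv /=.
have DUI := @differentiation_under_integral R _ _ mu f `[0, 1] (measurable_itv _) 0 (-1) 1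
  Ia (fun x _ => cont_int (f x) 0 1 (cft x)) derf1 (fun _ => M) (fun _ => M0)
  (cont_int (fun _ => M) 0 1 (ct_cst M)) Gub.
have Hv' : is_derive (0:R) (1:R) (fun e => \int[mu]_(t in `[0, 1]) f e t) 0.
  exact: (isd_ext Hvar costE).
move: DUI; rewrite derive1E; case: Hv' => _ -> /esym.
rewrite /partial1of2 => E; rewrite -[RHS]E.
apply: eq_Rintegral => t _.
rewrite derive1E; case: (fder 0 t) => _ ->.
rewrite /P /z scale0r addr0; congr (_ - _).
  by apply: eq_bigr => i _; rewrite mul0r addr0.
by apply: eq_bigr => i _; rewrite mul0r addr0.
Qed.


Lemma gq0 t : 0 <= t <= 1 -> g (q t) = 0.
Proof.
move=> ht.
pose dl t := -1 *: g (q t).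
have sdl : smooth_real dl.
  move=> k; apply: Ck_scale; apply/Ck_mxP => i j; rewrite (ord1 i).
  exact: (Ck_comp k n (fun x => g x 0 j) q (Ck_vec_coord k n 1 m g 0 j (hg k)) (q_smooth k)).
have sQ : smooth_real (fun _ : R => (0 : 'rV[R]_n)) by move=> k; exact: Ck_cst.
have := VAR (fun _ => 0) dl sQ sdl erefl erefl.
pose h t := \sum_(i < m) g (q t) 0 i * g (q t) 0 i.
have -> : (fun t => \sum_(i < n) u t 0 i * 'D_1 (fun _ : R => (0 : 'rV[R]_n)) t 0 i
     - \sum_(i < m) ((\sum_(j < n) (0 : 'rV[R]_n) 0 j * 'D_(evec j) g (q t) 0 i) * lam t 0 i
                      + g (q t) 0 i * dl t 0 i)) = h.
  apply/funext => s.
  have D0 : 'D_1 (fun _ : R => (0 : 'rV[R]_n)) s = 0 by exact: derive_cst.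
  rewrite D0 big1 ?sub0r; last by move=> i _; rewrite mxE mulr0.
  rewrite /h -sumrN; apply: eq_bigr => i _.
  rewrite big1 ?mul0r ?add0r; last by move=> j _; rewrite mxE mul0r.
  by rewrite /dl mxE mulN1r mulrN opprK.
move=> ih.
have ch : continuous h.
  by apply: ct_sum => i; apply: ct_mul; exact: (ct_coord 0 i (ct_comp (q_smooth 0%N) (hg 0%N))).
have hp : forall s, 0 <= s <= 1 -> 0 <= h s.
  by move=> s _; apply: sumr_ge0 => i _; rewrite -expr2 sqr_ge0.
have h0 := int01_zero h ch hp ih t ht.
have hp' : forall k, 0 <= g (q t) 0 k * g (q t) 0 k by move=> k; rewrite -expr2 sqr_ge0.
apply/matrixP => i j; rewrite (ord1 i) mxE.
have H := psumr_eq0P (fun k _ => hp' k) h0.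
have := H j isT.
by move/eqP; rewrite -expr2 sqrf_eq0 => /eqP.
Qed.


Lemma uder t : 0 <= t <= 1 -> 'D_1 u t = - (lam t *m (jacobian g (q t))^T).
Proof.
move=> ht.
pose phi (t : R) := t * (1 - t).
pose w t := lam t *m (jacobian g (q t))^T.
pose v t := 'D_1 u t + w t.
pose Q t := phi t *: v t.
have sw : smooth_real w.
  move=> k; apply/Ck_mxP => i j; rewrite (ord1 i).
  have -> : (fun t => w t 0 j) = (fun t => \sum_(i < m) lam t 0 i * 'D_(evec j) g (q t) 0 i).
    by apply/funext => s; rewrite /w w_coord.
  apply: Ck_sum => l; apply: Ck_mul; first exact: (coordC l (sl k)).
  have hD : Ck_vec k ('D_(evec j) g) by case: (hg k.+1) => _; apply.
  exact: (Ck_comp k n (fun x => 'D_(evec j) g x 0 l) q (Ck_vec_coord k n 1 m _ 0 l hD) (q_smooth k)).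
have su' : smooth_real ('D_1 u) := fun k => (su k.+1).2.
have sv : smooth_real v by move=> k; apply: Ck_add; [exact: su' | exact: sw].
have sphi : smooth_real phi.
  move=> k; have -> : phi = (fun t => t * (1 + (-1) * t)) by apply/funext => s; rewrite /phi mulN1r.
  apply: Ck_mul; first exact: Ck_id.
  apply: Ck_add; first exact: Ck_cst.
  by apply: Ck_mul; [exact: Ck_cst | exact: Ck_id].
have sQ : smooth_real Q.
  move=> k; apply/Ck_mxP => i j.
  have -> : (fun t => Q t i j) = (fun t => phi t * v t i j) by apply/funext => s; rewrite mxE.
  by apply: Ck_mul; [exact: sphi | move/Ck_mxP: (sv k); apply].
have Q0 : Q 0 = 0 by rewrite /Q /phi mul0r scale0r.
have Q1 : Q 1 = 0 by rewrite /Q /phi subrr mulr0 scale0r.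
have s0 : smooth_real (fun _ : R => (0 : 'rV[R]_m)) by move=> k; exact: Ck_cst.
have := VAR Q (fun _ => 0) sQ s0 Q0 Q1.
pose du := 'D_1 Q.
pose Sd t := \sum_(i < n) ('D_1 u t 0 i * Q t 0 i + u t 0 i * du t 0 i).
pose S t := \sum_(i < n) u t 0 i * Q t 0 i.
pose k t := phi t * \sum_(j < n) v t 0 j * v t 0 j.
have hu : forall s, is_derive s (1:R) u ('D_1 u s).
  by move=> s; apply: DeriveDef => //; case: (su 1%N) => du' _; exact: du'.
have hQ : forall s, is_derive s (1:R) Q (du s).
  by move=> s; apply: DeriveDef => //; case: (sQ 1%N) => dq _; exact: dq.
have dS : forall s, is_derive s (1:R) S (Sd s).
  move=> s; apply: isd_sum => i.
  exact: (isd_mul (isd_mx_coord 0 i (hu s)) (isd_mx_coord 0 i (hQ s))).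
have cu : forall i, continuous (fun s => u s 0 i) := fun i => coordC i (su 0).
have cu' : forall i, continuous (fun s => 'D_1 u s 0 i) := fun i => coordC i (su' 0).
have cQ : forall i, continuous (fun s => Q s 0 i) := fun i => coordC i (sQ 0).
have cdu : forall i, continuous (fun s => du s 0 i) := fun i => @coordC n du 0%N i (sQ 1%N).2.
have cv : forall i, continuous (fun s => v s 0 i) := fun i => coordC i (sv 0).
have cSd : continuous Sd.
  by apply: ct_sum => i; apply: ct_add; apply: ct_mul.
have ck : continuous k.
  by apply: ct_mul; [exact: (sphi 0%N) | apply: ct_sum => j; apply: ct_mul].
have intSd : \int[mu]_(x in `[0, 1]) Sd x = 0.
  rewrite -oint0_ge0 ?ler01 // (ftc_oint Sd S cSd dS 1) /S.
  by rewrite Q1 Q0 !big1 ?subrr // => i _; rewrite mxE mulr0.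
have E : forall s, \sum_(i < n) u s 0 i * 'D_1 Q s 0 i
     - \sum_(i < m) ((\sum_(j < n) Q s 0 j * 'D_(evec j) g (q s) 0 i) * lam s 0 i
                      + g (q s) 0 i * (fun _ : R => (0 : 'rV[R]_m)) s 0 i) = Sd s - k s.
  move=> s.
  have E1 : \sum_(i < m) ((\sum_(j < n) Q s 0 j * 'D_(evec j) g (q s) 0 i) * lam s 0 i
                      + g (q s) 0 i * (fun _ : R => (0 : 'rV[R]_m)) s 0 i)
            = \sum_(j < n) Q s 0 j * w s 0 j.
    under eq_bigr do rewrite mxE mulr0 addr0 mulr_suml.
    rewrite exchange_big /=; apply: eq_bigr => j _.
    rewrite /w w_coord mulr_sumr; apply: eq_bigr => i _; ring.
  have E2 : k s = \sum_(j < n) Q s 0 j * ('D_1 u s 0 j + w s 0 j).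
    rewrite /k mulr_sumr; apply: eq_bigr => j _; rewrite /Q /v !mxE; ring.
  rewrite E1 E2 /Sd -!sumrB; apply: eq_bigr => i _; rewrite /du; ring.
move=> HV.
have : \int[mu]_(x in `[0, 1]) (Sd x - k x) = 0.
  by apply: (eq_trans _ HV); apply: eq_Rintegral => s _; rewrite E.
rewrite RintegralB //; last 2 first.
  - exact: cont_int.
  - exact: cont_int.
rewrite intSd sub0r => /eqP; rewrite oppr_eq0 => /eqP ik.
have kp : forall s, 0 <= s <= 1 -> 0 <= k s.
  move=> s /andP[hs0 hs1]; apply: mulr_ge0.
    by apply: mulr_ge0 => //; rewrite subr_ge0.
  by apply: sumr_ge0 => j _; rewrite -expr2 sqr_ge0.
have k0 := int01_zero k ck kp ik.
have vj0 : forall j s, 0 < s < 1 -> v s 0 j = 0.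
  move=> j s /andP[hs0 hs1].
  have /eqP := k0 s (introT andP (conj (ltW hs0) (ltW hs1))).
  rewrite /k mulf_eq0 => /orP[|/eqP H].
    by rewrite /phi mulf_eq0 subr_eq0 (gt_eqF hs0) (gt_eqF hs1).
  have hp' : forall l, 0 <= v s 0 l * v s 0 l by move=> l; rewrite -expr2 sqr_ge0.
  have HH := psumr_eq0P (fun l _ => hp' l) H.
  have := HH j isT.
  by move/eqP; rewrite -expr2 sqrf_eq0 => /eqP.
apply/matrixP => i j; rewrite (ord1 i).
have := zero_ext01 (fun s => v s 0 j) (cv j) (vj0 j) t ht.
rewrite /v /w !mxE.
by move/eqP; rewrite addr_eq0 => /eqP.
Qed.

End Main.


Theorem proposition1 (R : realType) (n m : nat) (g : 'rV[R]_n -> 'rV[R]_m)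
  (hmn : (m <= n)%N)
  (hg : smooth_vec g)
  (hrank : forall q : 'rV[R]_n, g q = 0 -> \rank ((jacobian g q)^T) = m)
  (q0 qN : 'rV[R]_n) (hq0 : g q0 = 0) (hqN : g qN = 0)
  (u : R -> 'rV[R]_n) (lam : R -> 'rV[R]_m)
  (hopt : extremal g q0 qN u lam) :
  exists p : R -> 'rV[R]_n,
    state q0 u 0 = q0 /\ state q0 u 1 = qN /\
    forall t : R, t \in `[0, 1] ->
      is_derive t 1 (state q0 u) (u t) /\
      is_derive t 1 p (- (lam t *m (jacobian g (state q0 u t))^T)) /\
      g (state q0 u t) = 0 /\
      p t = u t.
Proof.
exists u; split; [|split].
- by apply/matrixP => i j; rewrite !mxE oint0_0 addr0.
- exact: hopt.1.2.2.
move=> t; rewrite in_itv /= => ht.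
split; first exact: (q_der n m g q0 qN u lam hopt t).
split.
  apply: DeriveDef; first by case: (hopt.1.1 1%N) => du _; exact: du.
  exact: (uder n m g hg q0 qN u lam hopt t ht).
split; last by [].
exact: (gq0 n m g hg q0 qN u lam hopt t ht).
Qed.
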